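(* Let ${}^{n}\mathbf C$, ${}^{n+1}\mathbf C$ and ${}^{n}\mathbf C_{\mathrm i}$ be symmetric positive definite $3\times3$ real matrices. The matrix $\mathbf M:=\overline{({}^{n+1}\mathbf C)^{-1}\,{}^{n}\mathbf C}$ has positive real eigenvalues and is diagonalizable, so its principal square root $\mathbf F_{\mathrm{sh}}:=\mathbf M^{1/2}$ is well defined; put $${}^{\mathrm{est}}\mathbf C_{\mathrm i}:=\mathbf F_{\mathrm{sh}}^{-T}\,{}^{n}\mathbf C_{\mathrm i}\,\mathbf F_{\mathrm{sh}}^{-1}.$$ Then: (i) $\mathbf F_{\mathrm{sh}}^{-T}\,\overline{{}^{n}\mathbf C}\,\mathbf F_{\mathrm{sh}}^{-1}=\overline{{}^{n+1}\mathbf C}$, $\det\mathbf F_{\mathrm{sh}}=1$, and ${}^{\mathrm{est}}\mathbf C_{\mathrm i}$ is symmetric positive definite with $\det{}^{\mathrm{est}}\mathbf C_{\mathrm i}=\det{}^{n}\mathbf C_{\mathrm i}$; moreover ${}^{\mathrm{est}}\mathbf C_{\mathrm i}=(\overline{{}^{n+1}\mathbf C\,({}^{n}\mathbf C)^{-1}})^{1/2}\,{}^{n}\mathbf C_{\mathrm i}\,(\overline{({}^{n}\mathbf C)^{-1}\,{}^{n+1}\mathbf C})^{1/2}$. (ii) (Weak invariance) For every real $3\times3$ matrix $\mathbf F_0$ with $\det\mathbf F_0=1$, if ${}^{n}\mathbf C$, ${}^{n+1}\mathbf C$, ${}^{n}\mathbf C_{\mathrm i}$ are replaced by $\mathbf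 F_0^{-T}\,{}^{n}\mathbf C\,\mathbf F_0^{-1}$, $\mathbf F_0^{-T}\,{}^{n+1}\mathbf C\,\mathbf F_0^{-1}$, $\mathbf F_0^{-T}\,{}^{n}\mathbf C_{\mathrm i}\,\mathbf F_0^{-1}$, then the resulting estimate equals $\mathbf F_0^{-T}\,{}^{\mathrm{est}}\mathbf C_{\mathrm i}\,\mathbf F_0^{-1}$.
   Context: For a matrix $\mathbf M$ with $\det\mathbf M>0$, $\overline{\mathbf M}:=(\det\mathbf M)^{-1/3}\mathbf M$. The principal square root of a diagonalizable matrix with positive eigenvalues is the unique square root with positive eigenvalues. $\mathbf M^{-T}=(\mathbf M^{-1})^T$. *)

(* Defs.v *)
(* real numbers rendered as an arbitrary real closed field R. *)
From HB Require Import structures.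
From mathcomp Require Import all_boot all_order all_algebra.
From Stdlib Require Import ClassicalEpsilon.
Set Implicit Arguments. Unset Strict Implicit. Unset Printing Implicit Defensive.
Import Order.TTheory GRing.Theory Num.Theory.
Local Open Scope ring_scope.

Definition cbrt (R : rcfType) (x : R) : R :=
  epsilon (inhabits 0) (fun y : R => y ^+ 3 = x).

(* isochoric part  M-bar := (det M)^(-1/3) M *)
Definition isoc (R : rcfType) (M : 'M[R]_3) : 'M[R]_3 :=
  (cbrt (\det M))^-1 *: M.

Definition invT (R : rcfType) (M : 'M[R]_3) : 'M[R]_3 := (invmx M)^T.

Definition spd (R : rcfType) (A : 'M[R]_3) : Prop :=
  A^T = A /\ forall v : 'rV[R]_3, v != 0 -> 0 < (v *m A *m v^T) 0 0.

(* all (complex) eigenvalues of S are positive reals: the characteristic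
   polynomial splits over R with positive roots *)
Definition pos_eigs (R : rcfType) (S : 'M[R]_3) : Prop :=
  exists d : 'I_3 -> R, (forall i, 0 < d i) /\
    char_poly S = \prod_(i < 3) ('X - (d i)%:P).

(* principal square root: the (unique) square root with positive eigenvalues *)
Definition psqrt (R : rcfType) (M : 'M[R]_3) : 'M[R]_3 :=
  epsilon (inhabits 0) (fun S : 'M[R]_3 => S *m S = M /\ pos_eigs S).

Definition Fsh (R : rcfType) (C0 C1 : 'M[R]_3) : 'M[R]_3 :=
  psqrt (isoc (invmx C1 *m C0)).

Definition estCi (R : rcfType) (C0 C1 Ci : 'M[R]_3) : 'M[R]_3 :=
  invT (Fsh C0 C1) *m Ci *m invmx (Fsh C0 C1).

(* Main.v *)
Require Import Defs.
From HB Require Import structures.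
From mathcomp Require Import all_boot all_order all_algebra.
From mathcomp Require Import complex.
From mathcomp Require Import ring lra.
From Stdlib Require Import ClassicalEpsilon.
Import Order.TTheory GRing.Theory Num.Theory.
Local Open Scope ring_scope.
Set Implicit Arguments. Unset Strict Implicit.

Section Cbrt.
Variable R : rcfType.
Implicit Types x y z : R.

Lemma cube_inj y z : y ^+ 3 = z ^+ 3 -> y = z.
Proof.
move=> h; apply/eqP; rewrite -subr_eq0; apply/eqP.
have e : (y - z) * (y ^+ 2 + y * z + z ^+ 2) = 0.
  by rewrite -[RHS](subrr (z ^+ 3)) -{1}h; ring.
move/eqP: e; rewrite mulf_eq0 => /orP[/eqP //|/eqP e].
have h1 := sqr_ge0 (2 * y + z); have h2 := sqr_ge0 z; have h3 := sqr_ge0 y.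
have hz2 : z ^+ 2 = 0 by nra.
have hy2 : y ^+ 2 = 0 by nra.
by move/eqP: hz2; rewrite sqrf_eq0 => /eqP ->; move/eqP: hy2; rewrite sqrf_eq0 => /eqP ->; rewrite subrr.
Qed.

Lemma cbrt_ex x : exists y : R, y ^+ 3 = x.
Proof.
pose p := 'X^3 - x%:P.
have hab : - (1 + `|x|) <= 1 + `|x| by have := normr_ge0 x; lra.
have [|y _ ry] := @poly_ivt R p (- (1 + `|x|)) (1 + `|x|) hab.
  rewrite !hornerE /=.
  have h0 := normr_ge0 x; have h1 := ler_norm x; have h2 := ler_normr x x.
  have h3 : - x <= `|x| by rewrite -normrN ler_norm.
  apply/andP; split; nra.
exists y; move: ry; rewrite /root !hornerE subr_eq0 => /eqP.
by [].
Qed.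

Lemma cbrtE x : cbrt x ^+ 3 = x.
Proof. rewrite /cbrt; apply: (epsilon_spec (inhabits 0) (fun y : R => y ^+ 3 = x)); exact: cbrt_ex. Qed.

Lemma cbrt_uniq x y : y ^+ 3 = x -> cbrt x = y.
Proof. by move=> h; apply: cube_inj; rewrite cbrtE. Qed.

Lemma cbrt_gt0 x : 0 < x -> 0 < cbrt x.
Proof.
move=> hx; have := cbrtE x; set c := cbrt x => hc.
rewrite ltNge; apply/negP => hc0.
have : c ^+ 3 <= 0 by rewrite exprS mulr_le0_ge0 // sqr_ge0.
lra.
Qed.

Lemma cbrtM x y : cbrt (x * y) = cbrt x * cbrt y.
Proof. by apply: cbrt_uniq; rewrite exprMn !cbrtE. Qed.

Lemma cbrtV x : cbrt (x^-1) = (cbrt x)^-1.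
Proof. by apply: cbrt_uniq; rewrite exprVn !cbrtE. Qed.

End Cbrt.


Section CharPoly.
Variable R : comUnitRingType.

Lemma horner_char_poly n (A : 'M[R]_n) x : (char_poly A).[x] = \det (x%:M - A).
Proof.
rewrite /char_poly -horner_evalE -det_map_mx; congr (\det _).
apply/matrixP => i j; rewrite !mxE /=.
by rewrite horner_evalE !hornerE hornerMn hornerX.
Qed.

Lemma char_poly_conj n (P A : 'M[R]_n) : P \in unitmx ->
  char_poly (P *m A *m invmx P) = char_poly A.
Proof.
move=> Pu; rewrite /char_poly /char_poly_mx.
have e : 'X%:M - map_mx polyC (P *m A *m invmx P) =
   map_mx polyC P *m ('X%:M - map_mx polyC A) *m map_mx polyC (invmx P).
  rewrite mulmxBr mulmxBl !map_mxM; congr (_ - _).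
  rewrite mul_mx_scalar -scalemxAl -mul_mx_scalar -map_mxM mulmxV //.
  by rewrite map_mx1 mul1mx.
rewrite e !det_mulmx mulrAC -det_mulmx -map_mxM mulmxV //.
by rewrite map_mx1 det1 mul1r.
Qed.

Lemma char_poly_tr n (A : 'M[R]_n) : char_poly A^T = char_poly A.
Proof.
rewrite /char_poly -det_tr; congr (\det _); rewrite /char_poly_mx.
by rewrite linearB /= tr_scalar_mx map_trmx trmxK.
Qed.

Lemma char_poly_diag n (d : 'rV[R]_n) :
  char_poly (diag_mx d) = \prod_(i < n) ('X - (d 0 i)%:P).
Proof.
rewrite char_poly_trig ?diag_mx_is_trig //.
by apply: eq_bigr => i _; rewrite mxE eqxx mulr1n.
Qed.

End CharPoly.

Section SqrtUniq.
Variable R : rcfType.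

Lemma pos_eigs_unit_shift (T : 'M[R]_3) (a : R) : pos_eigs T -> 0 < a ->
  (a%:M + T) \in unitmx.
Proof.
move=> [e [he hT]] ha.
have hd : \det ((- a)%:M - T) != 0.
  rewrite -horner_char_poly hT horner_prod; apply/prodf_neq0 => i _.
  rewrite !hornerE; have := he i; apply: contraTneq => h; lra.
rewrite unitmxE unitfE; move: hd; apply: contraNneq => h.
by rewrite -scalemx1 scaleNr scalemx1 -opprD -scaleN1r detZ h mulr0.
Qed.

Lemma sqrt_uniq (S T : 'M[R]_3) : S *m S = T *m T -> pos_eigs S -> pos_eigs T -> S = T.
Proof.
move=> hST hS hT; set X := S - T.
have hX : S *m X = X *m (- T).
  rewrite /X !mulmxE in hST *; by rewrite mulrBr mulrN mulrBl hST opprB.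
have hXd : X = S - T by [].
clearbody X.
have hp : forall p, horner_mx S p *m X = X *m horner_mx (- T) p.
  elim/poly_ind => [|p c IH]; first by rewrite !rmorph0 mul0mx mulmx0.
  rewrite !rmorphD !rmorphM /= !horner_mx_X !horner_mx_C -!mulmxE.
  by rewrite mulmxDl mulmxDr -mulmxA hX mulmxA IH -mulmxA !mul_mx_scalar mul_scalar_mx.
have h0 := hp (char_poly S); rewrite Cayley_Hamilton mul0mx in h0.
have hu : horner_mx (- T) (char_poly S) \in unitmx.
  case: hS => [d [hd ->]]; rewrite rmorph_prod.
  apply: (big_ind (fun M : 'M[R]_3 => M \in unitmx)) => //.
  - exact: unitmx1.
  - by move=> x y hx hy; rewrite -mulmxE unitmx_mul hx hy.
  move=> i _; rewrite rmorphB /= horner_mx_X horner_mx_C.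
  have -> : - T - (d i)%:M = - ((d i)%:M + T) by rewrite opprD addrC.
  rewrite -[_ \in unitmx]/(_ \is a GRing.unit) unitrN; exact: pos_eigs_unit_shift.
apply/eqP; rewrite -subr_eq0; apply/eqP.
by rewrite -hXd -[X](mulmxK hu) -h0 mul0mx.
Qed.

End SqrtUniq.


Lemma sym_diag (R : rcfType) n (S : 'M[R]_n) : S^T = S ->
  exists P : 'M[R]_n, exists d : 'rV[R]_n,
    P \in unitmx /\ P *m S = diag_mx d *m P.
Proof.
move=> hS.
pose f := real_complex R.
pose SC := map_mx f S.
have SCsym : SC \is symmetricmx.
  apply/is_hermitianmxP; rewrite expr0 scale1r map_mx_id //.
  by rewrite /SC map_trmx hS.
have SCreal : SC \is a realmx.
  apply/mxOverP => i j; rewrite mxE; apply/complex_realP; by exists (S i j).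
have SCherm := realsym_hermsym SCsym SCreal.
have /orthomx_spectralP hSC := hermitian_normalmx SCherm.
set U := spectralmx SC in hSC; set sp := spectral_diag SC in hSC.
have Uu : U \in unitmx by apply: spectral_unit.
have spreal : diag_mx sp \is a realmx.
  have := hermitian_spectral_diag_real SCherm => /mxOverP hsp.
  apply/mxOverP => i j; rewrite mxE; apply: rpredMn; exact: hsp.
have hsim : similar U SC (diag_mx sp).
  apply/(similarP Uu); rewrite {1}hSC !mulmxA mulmxV // mul1mx //.
have [Q /andP [Qreal Qu] /(similarP Qu) hQ] := real_similar (ex_intro2 _ _ U Uu hsim) SCreal spreal.
pose Qr := map_mx (@complex.Re R) Q.
pose dr := map_mx (@complex.Re R) sp.
have eQ : map_mx f Qr = Q.
  apply/matrixP => i j; rewrite !mxE; apply: RRe_real; exact: (mxOverP Qreal).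
have edr : map_mx f dr = sp.
  apply/matrixP => i j; rewrite !mxE; apply: RRe_real.
  by have := (mxOverP spreal) j j; rewrite mxE eqxx mulr1n (ord1 i).
refine (ex_intro _ Qr (ex_intro _ dr _)); split.
  rewrite unitmxE unitfE; move: Qu; rewrite unitmxE unitfE -eQ det_map_mx.
  by apply: contraNneq => ->; rewrite rmorph0.
apply: (@map_mx_inj _ _ f).
by rewrite !map_mxM eQ map_diag_mx edr.
Qed.


Section Mx.
Variable R : rcfType.
Local Notation M3 := 'M[R]_3.

Lemma invmx_eq (A B : M3) : A \in unitmx -> B *m A = 1%:M -> invmx A = B.
Proof. by move=> Au h; rewrite -[B](mulmxK Au) h mul1mx. Qed.

Lemma invmxM (A B : M3) : A \in unitmx -> B \in unitmx ->
  invmx (A *m B) = invmx B *m invmx A.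
Proof.
move=> Au Bu; apply: invmx_eq; first by rewrite unitmx_mul Au Bu.
by rewrite mulmxA -(mulmxA _ _ A) mulVmx // mulmx1 mulVmx.
Qed.

Lemma vvT_gt0 (v : 'rV[R]_3) : v != 0 -> 0 < (v *m v^T) 0 0.
Proof.
move=> hv; rewrite !mxE.
have [j hj] : exists j, v 0 j != 0.
  apply/existsP; move: hv; apply: contraR; rewrite negb_exists => /forallP h.
  apply/eqP/matrixP => i k; rewrite (ord1 i) !mxE; apply/eqP; move: (h k); by rewrite negbK.
rewrite (bigD1 j) //=.
have h1 : 0 < v 0 j * v^T j 0 by rewrite mxE -expr2 lt_def sqrf_eq0 hj sqr_ge0.
have h2 : 0 <= \sum_(i < 3 | i != j) v 0 i * v^T i 0.
  by apply: sumr_ge0 => i _; rewrite mxE -expr2 sqr_ge0.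
lra.
Qed.


Lemma row_unit_neq0 (P : M3) i : P \in unitmx -> row i P != 0.
Proof.
move=> Pu; apply/eqP => h.
have := mulmxK Pu (delta_mx 0 i : 'rV[R]_3); rewrite -rowE h mul0mx.
move/matrixP/(_ 0 i); rewrite !mxE !eqxx /= => /eqP; by rewrite eq_sym oner_eq0.
Qed.

Lemma spd_eig_pos (A P : M3) (d : 'rV[R]_3) : spd A -> P \in unitmx ->
  P *m A = diag_mx d *m P -> forall i, 0 < d 0 i.
Proof.
move=> [_ hA] Pu hP i.
set p := row i P.
have hp : p *m A = d 0 i *: p.
  by rewrite /p -row_mul hP row_mul row_diag_mx -scalemxAl -rowE.
have := hA p (row_unit_neq0 i Pu); rewrite hp -scalemxAl mxE.
by rewrite pmulr_lgt0 // vvT_gt0 // (row_unit_neq0 i Pu).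
Qed.

Lemma spd_congr (A G : M3) : spd A -> G \in unitmx -> spd (G^T *m A *m G).
Proof.
move=> [hs hA] Gu; split.
  by rewrite !trmx_mul trmxK hs mulmxA.
move=> v hv; have hw : v *m G^T != 0.
  apply: contra hv => /eqP h; apply/eqP.
  by rewrite -[v](mulmxK (_ : G^T \in unitmx)) ?h ?mul0mx // unitmx_tr.
have := hA _ hw; congr (0 < _ _ _).
by rewrite trmx_mul trmxK !mulmxA.
Qed.

Lemma diag_conj (A P : M3) (d : 'rV[R]_3) : P \in unitmx -> P *m A = diag_mx d *m P ->
  A = invmx P *m diag_mx d *m P.
Proof. by move=> Pu hP; rewrite -mulmxA -hP mulKmx. Qed.

Lemma det_diag_conj (P : M3) (d : 'rV[R]_3) : P \in unitmx ->
  \det (invmx P *m diag_mx d *m P) = \prod_i d 0 i.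
Proof.
move=> Pu; rewrite !det_mulmx det_inv det_diag mulrAC mulVr ?mul1r //.
Qed.

Lemma pos_eigs_conj (P : M3) (d : 'rV[R]_3) : P \in unitmx -> (forall i, 0 < d 0 i) ->
  pos_eigs (invmx P *m diag_mx d *m P).
Proof.
move=> Pu hd; exists (fun i => d 0 i); split => //.
rewrite -{2}(invmxK P) char_poly_conj ?unitmx_inv //.
exact: char_poly_diag.
Qed.

Lemma diag_conj_mul (P : M3) a b : P \in unitmx ->
  (invmx P *m diag_mx a *m P) *m (invmx P *m diag_mx b *m P)
  = invmx P *m (diag_mx a *m diag_mx b) *m P.
Proof. by move=> Pu; rewrite !mulmxA mulmxK // !mulmxA. Qed.

Lemma diag_mul (a b : 'rV[R]_3) :
  diag_mx a *m diag_mx b = diag_mx (\row_i (a 0 i * b 0 i)).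
Proof.
apply/matrixP => i j; rewrite mul_diag_mx !mxE.
by case: (i == j); rewrite ?mulr0n ?mulr1n ?mulr0.
Qed.

Lemma spd_unit (A : M3) : spd A -> A \in unitmx.
Proof.
move=> hA; have [P [d [Pu hP]]] := @sym_diag R 3 A (proj1 hA).
have hd := spd_eig_pos hA Pu hP.
rewrite (diag_conj Pu hP) unitmxE det_diag_conj // unitfE.
by rewrite lt0r_neq0 // prodr_gt0.
Qed.


Lemma pos_eigs_tr (A : M3) : pos_eigs A -> pos_eigs A^T.
Proof. by move=> [d [hd he]]; exists d; rewrite char_poly_tr. Qed.

Lemma sqrt_spd (B : M3) : spd B ->
  exists Rt : M3, [/\ Rt^T = Rt, Rt *m Rt = B & Rt \in unitmx].
Proof.
move=> hB; have [P [b [Pu hP]]] := @sym_diag R 3 B (proj1 hB).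
have hb := spd_eig_pos hB Pu hP.
pose r : 'rV[R]_3 := \row_i Num.sqrt (b 0 i).
have hr : forall i, 0 < r 0 i by move=> i; rewrite mxE sqrtr_gt0.
pose Rt := invmx P *m diag_mx r *m P.
have hsq : Rt *m Rt = B.
  rewrite diag_conj_mul // diag_mul [RHS](diag_conj Pu hP); congr (_ *m diag_mx _ *m _).
  apply/matrixP => i j; rewrite !mxE -expr2 sqr_sqrtr //.
  by rewrite (ord1 i). exact: ltW.
have hpe : pos_eigs Rt by apply: pos_eigs_conj.
apply: (ex_intro _ Rt); split => //.
- apply: sqrt_uniq; last exact: hpe; last exact: pos_eigs_tr.
  by rewrite -trmx_mul hsq (proj1 hB).
- by rewrite unitmxE det_diag_conj // unitfE lt0r_neq0 // prodr_gt0.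
Qed.

Lemma gen_diag (A B : M3) : spd A -> spd B ->
  exists P : M3, exists d : 'rV[R]_3,
   [/\ P \in unitmx, forall i, 0 < d 0 i & P *m (invmx B *m A) = diag_mx d *m P].
Proof.
move=> hA hB; have [Rt [hRs hRsq hRu]] := sqrt_spd hB.
pose G := invmx Rt.
have Gu : G \in unitmx by rewrite unitmx_inv.
have hGT : G^T = G by rewrite /G trmx_inv hRs.
pose H := G^T *m A *m G.
have hH : spd H by apply: spd_congr.
have [Q [h [Qu hQ]]] := @sym_diag R 3 H (proj1 hH).
have hh := spd_eig_pos hH Qu hQ.
exists (Q *m Rt); exists h; split => //.
  by rewrite unitmx_mul Qu hRu.
have e1 : invmx B *m A = G *m H *m Rt.
  by rewrite /H hGT -hRsq invmxM // !mulmxA /G mulmxKV.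
by rewrite e1 !mulmxA mulmxK // -hQ /H !mulmxA.
Qed.

End Mx.


Section Main.
Variable R : rcfType.
Local Notation M3 := 'M[R]_3.

Lemma psqrt_eq (M S : M3) : S *m S = M -> pos_eigs S -> psqrt M = S.
Proof.
move=> h1 h2.
have := epsilon_spec (inhabits 0) (fun S : M3 => S *m S = M /\ pos_eigs S)
   (ex_intro _ S (conj h1 h2)).
rewrite -/(psqrt M); move=> [h3 h4]; apply: sqrt_uniq => //.
by rewrite h3 h1.
Qed.

Lemma isocE (A : M3) : isoc A = (cbrt (\det A))^-1 *: A.
Proof. by []. Qed.

Lemma diag_scale (a : R) (d : 'rV[R]_3) : a *: diag_mx d = diag_mx (\row_i (a * d 0 i)).
Proof.
apply/matrixP => i j; rewrite !mxE.
by case: (i == j); rewrite ?mulr0n ?mulr1n ?mulr0.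
Qed.

Lemma cbrt_neq0 (x : R) : x != 0 -> cbrt x != 0.
Proof. by move=> hx; apply: contraNneq hx => h; rewrite -(cbrtE x) h expr0n. Qed.


Lemma sqr1_pos (x : R) : 0 < x -> x ^+ 2 = 1 -> x = 1.
Proof.
move=> hx h; have e : (x - 1) * (x + 1) = 0.
  by rewrite mulrBl mulrDr mulr1 mul1r -expr2 h; ring.
move/eqP: e; rewrite mulf_eq0 => /orP[/eqP h1|/eqP h1]; lra.
Qed.

Theorem main_part (C0 C1 Ci : M3) :
  spd C0 -> spd C1 -> spd Ci ->
  (pos_eigs (isoc (invmx C1 *m C0)) /\ diagonalizable (isoc (invmx C1 *m C0))) /\
  (Fsh C0 C1 *m Fsh C0 C1 = isoc (invmx C1 *m C0) /\ pos_eigs (Fsh C0 C1)) /\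
  (invT (Fsh C0 C1) *m isoc C0 *m invmx (Fsh C0 C1) = isoc C1 /\
   \det (Fsh C0 C1) = 1 /\
   spd (estCi C0 C1 Ci) /\
   \det (estCi C0 C1 Ci) = \det Ci /\
   estCi C0 C1 Ci =
     psqrt (isoc (C1 *m invmx C0)) *m Ci *m psqrt (isoc (invmx C0 *m C1))) /\
  (forall F0 : 'M[R]_3, \det F0 = 1 ->
     estCi (invT F0 *m C0 *m invmx F0) (invT F0 *m C1 *m invmx F0)
           (invT F0 *m Ci *m invmx F0)
     = invT F0 *m estCi C0 C1 Ci *m invmx F0).
Proof.
move=> h0 h1 hi.
have C0u := spd_unit h0; have C1u := spd_unit h1.
have [P [h [Pu hh hP]]] := gen_diag h0 h1.
set N := invmx C1 *m C0 in hP *.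
have eN := diag_conj Pu hP.
have dN : \det N = \prod_i h 0 i by rewrite eN det_diag_conj.
have dNpos : 0 < \det N by rewrite dN prodr_gt0.
set s := (cbrt (\det N))^-1.
have hs : 0 < s by rewrite invr_gt0 cbrt_gt0.
have eM : isoc N = invmx P *m diag_mx (\row_i (s * h 0 i)) *m P.
  by rewrite isocE -/s eN scalemxAl scalemxAr diag_scale.
have hsh : forall i, 0 < (\row_i (s * h 0 i) : 'rV[R]_3) 0 i.
  by move=> i; rewrite mxE mulr_gt0.
pose r : 'rV[R]_3 := \row_i Num.sqrt (s * h 0 i).
have hr : forall i, 0 < r 0 i by move=> i; rewrite mxE sqrtr_gt0 mulr_gt0.
pose F' := invmx P *m diag_mx r *m P.
have hF'2 : F' *m F' = isoc N.
  rewrite diag_conj_mul // diag_mul eM; congr (_ *m diag_mx _ *m _).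
  apply/matrixP => i j; rewrite !mxE -expr2 sqr_sqrtr // ltW // mulr_gt0 //.
have hF'pe : pos_eigs F' by apply: pos_eigs_conj.
have eF : Fsh C0 C1 = F' by apply: psqrt_eq.
set F := Fsh C0 C1 in eF *.
have hF2 : F *m F = isoc N by rewrite eF.
have hFpe : pos_eigs F by rewrite eF.
have dFpos : 0 < \det F by rewrite eF det_diag_conj // prodr_gt0.
have dM : \det (isoc N) = 1.
  rewrite isocE detZ -/s /s exprVn cbrtE mulVf //; exact: lt0r_neq0.
have dF : \det F = 1.
  by apply: sqr1_pos => //; rewrite expr2 -det_mulmx hF2.
have Fu : F \in unitmx by rewrite unitmxE dF unitr1.
pose ri : 'rV[R]_3 := \row_i (r 0 i)^-1.
have hri : forall i, 0 < ri 0 i by move=> i; rewrite mxE invr_gt0.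
have eFi : invmx F = invmx P *m diag_mx ri *m P.
  apply: (invmx_eq Fu); rewrite eF diag_conj_mul // diag_mul.
  have -> : (\row_i (ri 0 i * r 0 i) : 'rV[R]_3) = const_mx 1.
    apply/matrixP => i j; rewrite !mxE mulVf // lt0r_neq0 // sqrtr_gt0 mulr_gt0 //.
  by rewrite diag_const_mx mulmx1 mulVmx.
have hFipe : pos_eigs (invmx F) by rewrite eFi; apply: pos_eigs_conj.
have hMT : (isoc N)^T = C1 *m isoc N *m invmx C1.
  rewrite isocE -/s linearZ /= -scalemxAr -scalemxAl; congr (_ *: _).
  by rewrite /N trmx_mul trmx_inv (proj1 h0) (proj1 h1) mulKVmx.
have hFT : F^T = C1 *m F *m invmx C1.
  apply: sqrt_uniq.
  - by rewrite -trmx_mul hF2 hMT !mulmxA mulmxKV // -[C1 *m F *m F]mulmxA hF2.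
  - exact: pos_eigs_tr.
  - case: hFpe => d [hd he]; exists d; split => //.
    by rewrite char_poly_conj.
have FtCF : F^T *m C1 *m F = s *: C0.
  by rewrite hFT mulmxKV // -mulmxA hF2 isocE -/s -scalemxAr mulKVmx.
set c0 := cbrt (\det C0); set c1 := cbrt (\det C1).
have d0 : \det C0 != 0 by rewrite -unitfE -unitmxE.
have d1 : \det C1 != 0 by rewrite -unitfE -unitmxE.
have c0n : c0 != 0 by apply: cbrt_neq0.
have c1n : c1 != 0 by apply: cbrt_neq0.
have es : s = c1 / c0.
  rewrite /s /N det_mulmx det_inv cbrtM cbrtV -/c0 -/c1 invfM invrK mulrC //.
have hC0 : C0 = s^-1 *: (F^T *m C1 *m F).
  by rewrite FtCF scalerA mulVf ?scale1r // lt0r_neq0.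
have part1 : invT F *m isoc C0 *m invmx F = isoc C1.
  rewrite /invT trmx_inv !isocE -/c0 -/c1 hC0.
  rewrite -!scalemxAr -!scalemxAl !mulmxA mulVmx ?unitmx_tr // mul1mx mulmxK // scalerA.
  congr (_ *: _); rewrite es; field; by apply/andP.
have hest : spd (invT F *m Ci *m invmx F).
  by rewrite /invT; apply: spd_congr => //; rewrite unitmx_inv.
have dest : \det (invT F *m Ci *m invmx F) = \det Ci.
  by rewrite /invT !det_mulmx det_tr det_inv dF invr1 mul1r mulr1.
have Mu : isoc N \in unitmx by rewrite unitmxE dM unitr1.
have eMi : invmx (isoc N) = isoc (invmx C0 *m C1).
  rewrite [in LHS]isocE -/s invmxZ //.
  rewrite /N invmxM ?unitmx_inv // invmxK isocE det_mulmx !det_inv.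
  congr (_ *: _); rewrite /s invrK /N det_mulmx det_inv -cbrtV invfM invrK mulrC //.
have eA : psqrt (isoc (invmx C0 *m C1)) = invmx F.
  by apply: psqrt_eq => //; rewrite -invmxM // hF2 eMi.
have eB : psqrt (isoc (C1 *m invmx C0)) = invT F.
  apply: psqrt_eq; last by rewrite /invT; apply: pos_eigs_tr.
  rewrite /invT -trmx_mul -invmxM // hF2 eMi !isocE linearZ /= !det_mulmx mulrC.
  by rewrite trmx_mul trmx_inv (proj1 h0) (proj1 h1).
have part2 : forall F0 : 'M[R]_3, \det F0 = 1 ->
     estCi (invT F0 *m C0 *m invmx F0) (invT F0 *m C1 *m invmx F0)
           (invT F0 *m Ci *m invmx F0)
     = invT F0 *m estCi C0 C1 Ci *m invmx F0.
  move=> F0 hF0.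
  have F0u : F0 \in unitmx by rewrite unitmxE hF0 unitr1.
  rewrite /estCi -/F /invT.
  set E := invmx F0.
  have Eu : E \in unitmx by rewrite unitmx_inv.
  have ETu : E^T \in unitmx by rewrite unitmx_tr.
  have dE : \det E != 0 by rewrite -unitfE -unitmxE.
  have eN2 : invmx (E^T *m C1 *m E) *m (E^T *m C0 *m E) = invmx E *m N *m E.
    by rewrite !invmxM ?unitmx_mul ?ETu ?C1u // !mulmxA mulmxKV.
  have eM2 : isoc (invmx E *m N *m E) = invmx E *m isoc N *m E.
    rewrite !isocE !det_mulmx det_inv mulrAC mulVf ?mul1r //.
    by rewrite -scalemxAr -scalemxAl.
  have eF2 : Fsh (E^T *m C0 *m E) (E^T *m C1 *m E) = invmx E *m F *m E.
    rewrite /Fsh eN2 eM2; apply: psqrt_eq.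
    - by rewrite !mulmxA mulmxK // -[invmx E *m F *m F]mulmxA hF2.
    - case: hFpe => d [hd he]; exists d; split => //.
      by rewrite -{2}(invmxK E) char_poly_conj ?unitmx_inv.
  have eFi2 : invmx (invmx E *m F *m E) = invmx E *m invmx F *m E.
    apply: invmx_eq; first by rewrite !unitmx_mul unitmx_inv Eu Fu.
    by rewrite !mulmxA mulmxK // mulmxKV // mulVmx.
  rewrite eF2 eFi2.
  have u1 : invmx F0^T \in unitmx by rewrite unitmx_inv unitmx_tr.
  by rewrite !trmx_mul !mulmxA !trmx_inv (mulmxKV u1) (mulmxK Eu).
split.
  rewrite eM; split; first exact: pos_eigs_conj.
  exists P => //; rewrite /similar_to conjumx // !mulmxA (mulmxK Pu) (mulmxV Pu) mul1mx.
  exact: diag_mx_is_diag.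
split; first by split.
split; last exact: part2.
rewrite /estCi -/F eA eB.
by split.
Qed.

End Main.


Unset Implicit Arguments.

Theorem mainTheorem7 (R : rcfType) (C0 C1 Ci : 'M[R]_3) :
  spd C0 -> spd C1 -> spd Ci ->
  (* M has positive real eigenvalues and is diagonalizable *)
  (pos_eigs (isoc (invmx C1 *m C0)) /\ diagonalizable (isoc (invmx C1 *m C0))) /\
  (* F_sh is a square root of M with positive eigenvalues *)
  (Fsh C0 C1 *m Fsh C0 C1 = isoc (invmx C1 *m C0) /\ pos_eigs (Fsh C0 C1)) /\
  (* (i) *)
  (invT (Fsh C0 C1) *m isoc C0 *m invmx (Fsh C0 C1) = isoc C1 /\
   \det (Fsh C0 C1) = 1 /\
   spd (estCi C0 C1 Ci) /\
   \det (estCi C0 C1 Ci) = \det Ci /\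
   estCi C0 C1 Ci =
     psqrt (isoc (C1 *m invmx C0)) *m Ci *m psqrt (isoc (invmx C0 *m C1))) /\
  (* (ii) weak invariance *)
  (forall F0 : 'M[R]_3, \det F0 = 1 ->
     estCi (invT F0 *m C0 *m invmx F0) (invT F0 *m C1 *m invmx F0)
           (invT F0 *m Ci *m invmx F0)
     = invT F0 *m estCi C0 C1 Ci *m invmx F0).
Proof. exact: main_part. Qed.
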